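(* Let $(\mathfrak{Q},\&,e)$ be a non-trivial unital quantale and let $\alpha$ be a $\mathfrak{Q}$-preorder on a $\mathfrak{Q}$-subset $(X,|\cdot|)$. (1) If $|\cdot|'\colon X\to\mathfrak{Q}$ is another map with $|x|\le|x|'\le\alpha(x,x)$ for all $x\in X$, then $\alpha$ is also a $\mathfrak{Q}$-preorder on the $\mathfrak{Q}$-subset $(X,|\cdot|')$. (2) If $\mathfrak{Q}$ is integral, then $\alpha(x,x)=|x|$ for every $x\in X$.
   Context: A unital quantale $(\mathfrak{Q},\&,e)$ is a complete lattice with an associative multiplication $\&$ with unit $e$, preserving arbitrary joins in each variable; non-trivial means $\bot<e$; integral means $e=\top$. Implications: $p\& q\le r\iff p\le r/ q\iff q\le p\backslash r$. A $\mathfrak{Q}$-subset is a set $X$ with a map $|\cdot|\colon X\to\mathfrak{Q}$. A $\mathfrak{Q}$-preorder on $(X,|\cdot|)$ is a map $\alpha\colon X\times X\to\mathfrak{Q}$ such that for all $x,y,z\in X$: (divisibility) $(\alpha(x,y)/|x|)\&|x|=\alpha(x,y)=|y|\&(|y|\backslash\alpha(x,y))$; (reflexivity) $|x|\le\alpha(x,x)$; (transitivity) $(\alpha(y,z)/|y|)\&\alpha(x,y)=\alpha(y,z)\&(|y|\backslash\alpha(x,y))\le\alpha(x,z)$. *)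

(* Defs.v *)
Record quantale := Quantale {
  qcar :> Type;
  qle : qcar -> qcar -> Prop;
  qle_refl : forall a, qle a a;
  qle_trans : forall a b c, qle a b -> qle b c -> qle a c;
  qle_antisym : forall a b, qle a b -> qle b a -> a = b;
  qsup : (qcar -> Prop) -> qcar;
  qsup_ub : forall (S : qcar -> Prop) a, S a -> qle a (qsup S);
  qsup_least : forall (S : qcar -> Prop) b,
      (forall a, S a -> qle a b) -> qle (qsup S) b;
  qmul : qcar -> qcar -> qcar;
  qunit : qcar;
  qmulA : forall a b c, qmul a (qmul b c) = qmul (qmul a b) c;
  qmul1l : forall a, qmul qunit a = a;
  qmul1r : forall a, qmul a qunit = a;
  qmul_supr : forall a (S : qcar -> Prop),
      qmul a (qsup S) = qsup (fun y => exists x, S x /\ y = qmul a x);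
  qmul_supl : forall a (S : qcar -> Prop),
      qmul (qsup S) a = qsup (fun y => exists x, S x /\ y = qmul x a)
}.

Arguments qle {q} _ _.
Arguments qsup {q} _.
Arguments qmul {q} _ _.
Arguments qunit {q}.

Notation "a <=q b" := (qle a b) (at level 70).
Notation "a & b" := (qmul a b) (at level 40, left associativity).

Definition qbot {Q : quantale} : Q := qsup (fun _ => False).
Definition qtop {Q : quantale} : Q := qsup (fun _ => True).

(** Implications: p & q <= r <-> p <= r / q <-> q <= p \ r. *)
Definition qrdiv {Q : quantale} (r q : Q) : Q := qsup (fun p => p & q <=q r).
Definition qldiv {Q : quantale} (p r : Q) : Q := qsup (fun q => p & q <=q r).

Definition nontrivial (Q : quantale) : Prop :=
  (@qbot Q) <=q qunit /\ (@qbot Q) <> qunit.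

Definition integral (Q : quantale) : Prop := @qunit Q = qtop.

Definition Qpreorder {Q : quantale} {X : Type} (nm : X -> Q)
    (alpha : X -> X -> Q) : Prop :=
  (forall x y, (qrdiv (alpha x y) (nm x)) & nm x = alpha x y /\
               alpha x y = nm y & (qldiv (nm y) (alpha x y))) /\
  (forall x, nm x <=q alpha x x) /\
  (forall x y z,
      (qrdiv (alpha y z) (nm y)) & alpha x y
        = alpha y z & (qldiv (nm y) (alpha x y)) /\
      (qrdiv (alpha y z) (nm y)) & alpha x y <=q alpha x z).

(* Main.v *)
Require Import Defs.

Section L.
Variable Q : quantale.
Implicit Types a b c p q r : Q.

Lemma sup2 a b : a <=q b -> qsup (fun t => t = a \/ t = b) = b.
Proof.
  intros H. apply qle_antisym.
  - apply qsup_least. intros t [->| ->]; [exact H| apply qle_refl].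
  - apply qsup_ub. now right.
Qed.

Lemma monol a b c : a <=q b -> a & c <=q b & c.
Proof.
  intros H. rewrite <- (sup2 _ _ H). rewrite qmul_supl.
  apply qsup_ub. exists a. split; auto.
Qed.

Lemma monor a b c : a <=q b -> c & a <=q c & b.
Proof.
  intros H. rewrite <- (sup2 _ _ H). rewrite qmul_supr.
  apply qsup_ub. exists a. split; auto.
Qed.

Lemma rdivE p q r : p & q <=q r <-> p <=q qrdiv r q.
Proof.
  split; intros H.
  - apply qsup_ub. exact H.
  - eapply qle_trans. apply monol. exact H.
    unfold qrdiv. rewrite qmul_supl. apply qsup_least.
    intros t [x [Hx ->]]. exact Hx.
Qed.

Lemma ldivE p q r : p & q <=q r <-> q <=q qldiv p r.
Proof.
  split; intros H.
  - apply qsup_ub. exact H.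
  - eapply qle_trans. apply monor. exact H.
    unfold qldiv. rewrite qmul_supr. apply qsup_least.
    intros t [x [Hx ->]]. exact Hx.
Qed.

Lemma rdiv_le r q : qrdiv r q & q <=q r.
Proof. apply rdivE, qle_refl. Qed.
Lemma ldiv_le p r : p & qldiv p r <=q r.
Proof. apply ldivE, qle_refl. Qed.

End L.

Theorem proposition3p3 (Q : quantale) (X : Type) (nm : X -> Q)
    (alpha : X -> X -> Q) :
  nontrivial Q -> Qpreorder nm alpha ->
  (forall nm' : X -> Q,
      (forall x, nm x <=q nm' x /\ nm' x <=q alpha x x) ->
      Qpreorder nm' alpha) /\
  (integral Q -> forall x, alpha x x = nm x).
Proof.
  intros _ [Hdiv [Hrefl Htr]]. split.
  - intros nm' Hn.
    assert (Rd : forall x y, qrdiv (alpha x y) (nm x) <=q qrdiv (alpha x y) (nm' x)).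
    { intros x y. apply rdivE. eapply qle_trans. apply monor. apply (proj2 (Hn x)).
      apply (proj2 (Htr x x y)). }
    assert (Ld : forall x y, qldiv (nm y) (alpha x y) <=q qldiv (nm' y) (alpha x y)).
    { intros x y. apply ldivE. eapply qle_trans. apply monol. apply (proj2 (Hn y)).
      destruct (Htr x y y) as [E L]. rewrite <- E. exact L. }
    assert (Rd2 : forall b x, qrdiv b (nm' x) <=q qrdiv b (nm x)).
    { intros b x. apply rdivE. eapply qle_trans. apply monor. apply (proj1 (Hn x)).
      apply rdiv_le. }
    assert (Ld2 : forall b x, qldiv (nm' x) b <=q qldiv (nm x) b).
    { intros b x. apply ldivE. eapply qle_trans. apply monol. apply (proj1 (Hn x)).
      apply ldiv_le. }
    assert (ER : forall x y, qrdiv (alpha x y) (nm' x) = qrdiv (alpha x y) (nm x)).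
    { intros. apply qle_antisym; auto. }
    assert (EL : forall x y, qldiv (nm' y) (alpha x y) = qldiv (nm y) (alpha x y)).
    { intros. apply qle_antisym; auto. }
    split; [|split].
    + intros x y. split.
      * apply qle_antisym. apply rdiv_le.
        apply qle_trans with (qrdiv (alpha x y) (nm x) & nm x).
        rewrite (proj1 (Hdiv x y)). apply qle_refl.
        rewrite ER. apply monor, (proj1 (Hn x)).
      * apply qle_antisym.
        -- apply qle_trans with (nm y & qldiv (nm y) (alpha x y)).
           rewrite <- (proj2 (Hdiv x y)). apply qle_refl.
           rewrite EL. apply monol, (proj1 (Hn y)).
        -- apply ldiv_le.
    + intros x. apply (proj2 (Hn x)).
    + intros x y z. assert (A := ER y z). assert (B := EL x y).
      rewrite A, B. apply Htr.
  - intros Hint x. apply qle_antisym; [|apply Hrefl].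
    rewrite (proj2 (Hdiv x x)). apply qle_trans with (nm x & qunit).
    2: rewrite qmul1r; apply qle_refl.
    apply monor. rewrite Hint. apply qsup_ub. exact I.
Qed.
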